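(* Let $B$ be a Ferrers board with $n$ columns, padded with columns of height zero on the left so that its root vector $\xi(B)=\langle z_1,\ldots,z_n\rangle$ has only non-negative entries. For each integer $k$ let $v_k$ be the number of entries of $\xi(B)$ equal to $k$, and let $M$ be the greatest integer with $v_M\neq 0$. If, for every $0\le i<M-1$, $v_i>1$ implies $v_{i+1}>1$, then $B$ is connected by a sequence of edges in the rook equivalence graph $G(B)$ to a Ferrers board $B'$ whose root vector has the form $\xi(B')=\langle 0,1,\ldots,M-1,M,\ldots,z_n\rangle$, i.e. the first $M+1$ entries of $\xi(B')$ are $0,1,\ldots,M$ in increasing order.
   Context: A Ferrers board is given by a weakly increasing sequence of non-negative integers $B=(b_1,\ldots,b_n)$ of column heights; it is the set of unit cells in the first quadrant lying in column $i$ and rows $1,\ldots,b_i$. Prepending columns of height $0$ on the left does not change the board, and boards are compared using the same number of columns by such padding. A placement of $k$ rooks on $B$ is a set of $k$ cells of $B$ no two in the same row or column; $r_k(B)$ is the number of such placements. Two boards are rook equivalent if they have equal $r_k$ for all $k\ge 0$. The root vector of $B$ is $\xi(B)=\langle 0-b_1,1-b_2,\ldots,(n-1)-b_n\rangle$. The rook equivalence graph $G(B)$ has as vertices all Ferrers boards rook equivalent to $B$, and $\{B_1,B_2\}$ is an edge iff, written with the same number of columns, $B_1$ and $B_2$ differ in exactly two columns $i$ and $j$, where $B_1$ has $k$ more cells than $B_2$ in column $i$ and $k$ fewer cells than $B_2$ in column $j$, for some $k>0$. *)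

(* Defs.v *)
From mathcomp Require Import all_boot all_order all_algebra.
Set Implicit Arguments. Unset Strict Implicit. Unset Printing Implicit Defensive.
Import Order.TTheory GRing.Theory Num.Theory.

(* A Ferrers board is a weakly increasing sequence of column heights
   b = [:: b_1; ...; b_n]; column i (0-indexed) holds the cells in rows
   0, ..., b_i - 1 (0-indexed). *)
Definition ferrers (b : seq nat) : bool := sorted leq b.

Definition height (b : seq nat) : nat := foldr maxn 0 b.

Definition rook_number (b : seq nat) (k : nat) : nat :=
  #|[set P : {set 'I_(size b) * 'I_(height b)} |
      [&& [forall c in P, (c.2 < nth 0 b c.1)%N],
          [forall c in P, forall d in P,
              ((c.1 == d.1) || (c.2 == d.2)) ==> (c == d)]
        & #|P| == k]]|.

Definition rook_equiv (b1 b2 : seq nat) : Prop :=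
  forall k, rook_number b1 k = rook_number b2 k.

Definition pad (b : seq nat) (m : nat) : seq nat := nseq (m - size b) 0%N ++ b.

Definition rook_edge (b1 b2 : seq nat) : Prop :=
  let m := maxn (size b1) (size b2) in
  let c1 := pad b1 m in
  let c2 := pad b2 m in
  exists i j k : nat,
    [/\ (i < m)%N, (j < m)%N, i != j & (0 < k)%N] /\
    [/\ nth 0%N c1 i = (nth 0%N c2 i + k)%N,
        (nth 0%N c1 j + k)%N = nth 0%N c2 j &
        forall l, (l < m)%N -> l != i -> l != j -> nth 0%N c1 l = nth 0%N c2 l].

Definition G_vertex (B b : seq nat) : Prop := ferrers b /\ rook_equiv b B.

Inductive G_connected (B : seq nat) : seq nat -> seq nat -> Prop :=
| G_refl b : G_connected B b b
| G_step b1 b2 b3 :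
    G_vertex B b1 -> G_vertex B b2 -> rook_edge b1 b2 ->
    G_connected B b2 b3 -> G_connected B b1 b3.

Definition root_vector (b : seq nat) : seq int :=
  [seq (i%:Z - (nth 0%N b i)%:Z)%R | i <- iota 0 (size b)].

Definition vcount (b : seq nat) (k : int) : nat := count (pred1 k) (root_vector b).

(* Main.v *)
From mathcomp Require Import all_boot all_order all_algebra.
Require Import Defs.
From mathcomp Require Import zify ring lra.
Set Implicit Arguments. Unset Strict Implicit. Unset Printing Implicit Defensive.
Import Order.TTheory GRing.Theory Num.Theory.
Local Open Scope ring_scope.

Fixpoint Fr (zr : seq int) (k : nat) : int :=
  match zr with
  | [::] => (k == 0%N)%:R
  | c :: zr' => match k with
                | 0%N => Fr zr' 0
                | k'.+1 => Fr zr' k + ((size zr')%:Z - c - k'%:Z) * Fr zr' k'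
                end
  end.

Lemma Fr_swap c d s k : Fr [:: c, d & s] k = Fr [:: d, c & s] k.
Proof.
case: k => [//|[|k]] /=.
  rewrite ?intS; ring.
rewrite ?intS; ring.
Qed.

Lemma Fr_cong u s t : size s = size t -> (forall k, Fr s k = Fr t k) ->
  forall k, Fr (u ++ s) k = Fr (u ++ t) k.
Proof.
move=> Hs H; elim: u => [|x u IH] k //=.
by case: k => [|k]; rewrite ?IH ?size_cat ?Hs.
Qed.

Lemma Fr_move x s t k : Fr (x :: s ++ t) k = Fr (s ++ x :: t) k.
Proof.
elim: s k => [//|y s IH] k.
rewrite !cat_cons Fr_swap.
apply: (@Fr_cong [:: y] (x :: s ++ t) (s ++ x :: t)) => //.
by rewrite /= !size_cat /= addnS.
Qed.

Lemma Fr_catCA s1 s2 s3 k : Fr (s1 ++ s2 ++ s3) k = Fr (s2 ++ s1 ++ s3) k.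
Proof.
elim: s1 k => [//|x s1 IH] k.
rewrite cat_cons.
have -> : Fr (x :: s1 ++ s2 ++ s3) k = Fr (x :: s2 ++ s1 ++ s3) k.
  apply: (@Fr_cong [:: x]) => //; by rewrite !size_cat; lia.
by rewrite Fr_move catA.
Qed.

Lemma Fr_perm s t : perm_eq s t -> forall k, Fr s k = Fr t k.
Proof.
move=> H k.
apply: (@catCA_perm_ind _ (fun u => Fr s k = Fr u k)) H _ => //.
move=> s1 s2 s3 ->; exact: Fr_catCA.
Qed.

Local Close Scope ring_scope.

Section Rook.
Variables (N H : nat) (w : nat -> nat).
Definition nonatk (P : {set 'I_N * 'I_H}) : bool :=
  [forall c in P, forall d in P, ((c.1 == d.1) || (c.2 == d.2)) ==> (c == d)].
Definition Sset (m k : nat) : {set {set 'I_N * 'I_H}} :=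
  [set P : {set 'I_N * 'I_H} |
    [&& [forall c in P, (c.1 < m) && (c.2 < w c.1)], nonatk P & #|P| == k]].

Lemma Sset0 m : Sset m 0 = [set set0].
Proof.
apply/setP => P; rewrite !inE cards_eq0.
have [->|nP] := eqVneq P set0; last by rewrite !andbF.
rewrite andbT; apply/andP; split; first by apply/forallP => c; rewrite inE.
by apply/forallP => c; rewrite inE.
Qed.

Lemma Sset_m0 k : #|Sset 0 k.+1| = 0.
Proof.
apply/eqP; rewrite cards_eq0; apply/eqP/setP => P; rewrite !inE.
apply/negP => /and3P [/forall_inP H1 _ /eqP HP].
have : (0 < #|P|) by rewrite HP.
by case/card_gt0P => c /H1 /andP []; rewrite ltn0.
Qed.

Definition rows (Q : {set 'I_N * 'I_H}) : {set 'I_H} := [set c.2 | c in Q].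

Lemma card_rows Q : nonatk Q -> #|rows Q| = #|Q|.
Proof.
move=> /forall_inP HQ; apply: card_in_imset => c d Hc Hd E.
have /forall_inP /(_ d Hd) := HQ c Hc; rewrite E eqxx orbT /=.
by move/eqP.
Qed.

Lemma card_lt t : t <= H -> #|[set r : 'I_H | r < t]| = t.
Proof.
move=> tH.
have -> : [set r : 'I_H | r < t] = [set widen_ord tH r | r : 'I_t].
  apply/setP => r; rewrite !inE; apply/idP/imsetP.
    by move=> rt; exists (Ordinal rt) => //; apply/val_inj.
  by case=> r' _ ->; rewrite /= ltn_ord.
rewrite card_imset ?card_ord //.
by move=> x y /(congr1 val) /= E; apply/val_inj.
Qed.

Lemma nonatkP (P : {set 'I_N * 'I_H}) : reflect (forall c d, c \in P -> d \in P ->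
   (c.1 == d.1) || (c.2 == d.2) -> c = d) (nonatk P).
Proof.
apply: (iffP forall_inP) => [H1 c d Hc Hd E|H1 c Hc].
  by have /forall_inP /(_ d Hd) := H1 c Hc; rewrite E /= => /eqP.
by apply/forall_inP => d Hd; apply/implyP => E; rewrite (H1 c d Hc Hd E).
Qed.

Lemma SsetP m k (P : {set 'I_N * 'I_H}) : reflect [/\ forall c, c \in P -> (c.1 < m) && (c.2 < w c.1),
   nonatk P & #|P| = k] (P \in Sset m k).
Proof.
rewrite inE; apply: (iffP and3P) => [[/forall_inP H1 H2 /eqP H3]|[H1 H2 H3]].
  by split.
by split => //; [apply/forall_inP | apply/eqP].
Qed.

Variables (mo : 'I_N).
Hypotheses (HwH : w mo <= H) (Hw : forall j, j < mo -> w j <= w mo).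

Lemma Sset_bound k Q : Q \in Sset mo k -> k <= w mo.
Proof.
case/SsetP => H1 H2 HQ.
rewrite -HQ -card_rows // -(card_lt HwH).
apply: subset_leq_card; apply/subsetP => r /imsetP [c Hc ->].
rewrite inE; case/andP: (H1 c Hc) => c1 c2.
exact: leq_trans c2 (Hw c1).
Qed.

Definition gP (P : {set 'I_N * 'I_H}) := [set c in P | c.1 != mo].
Definition RQ (Q : {set 'I_N * 'I_H}) := [set r : 'I_H | (r < w mo) && (r \notin rows Q)].
Definition Bp := [set P : {set 'I_N * 'I_H} | [exists c in P, c.1 == mo]].

Lemma card_RQ k Q : Q \in Sset mo k -> #|RQ Q| = w mo - k.
Proof.
move=> HQ; have := HQ; case/SsetP => H1 H2 H3.
have -> : RQ Q = [set r : 'I_H | r < w mo] :\: rows Q.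
  by apply/setP => r; rewrite !inE andbC.
rewrite cardsD.
have -> : [set r : 'I_H | r < w mo] :&: rows Q = rows Q.
  apply/setIidPr/subsetP => r /imsetP [c Hc ->].
  rewrite inE; case/andP: (H1 c Hc) => c1 c2.
  exact: leq_trans c2 (Hw c1).
by rewrite card_lt // -H3 -card_rows //.
Qed.

Lemma Sset_noB k : Sset mo.+1 k :\: Bp = Sset mo k.
Proof.
apply/setP => P; rewrite inE [P \in Bp]inE negb_exists_in.
apply/andP/SsetP => [[/forall_inP Hn /SsetP [H1 H2 H3]]|[H1 H2 H3]].
  split => // c Hc; have := H1 c Hc; have := Hn c Hc.
  by rewrite ltnS leq_eqVlt -val_eqE => /negbTE ->.
split; first apply/forall_inP => c Hc.
  by case/andP: (H1 c Hc); rewrite -val_eqE; case: ltngtP.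
apply/SsetP; split => // c Hc; case/andP: (H1 c Hc) => c1 ->.
by rewrite andbT ltnW.
Qed.

Lemma gP_D1 (P : {set 'I_N * 'I_H}) c0 : nonatk P -> c0 \in P -> c0.1 == mo -> gP P = P :\ c0.
Proof.
move=> /nonatkP H2 Hc0 E0.
apply/setP => c; rewrite !inE andbC; case Hc: (c \in P); rewrite ?andbT ?andbF //.
apply/idP/idP => Hne.
  by apply/eqP => E; move: Hne; rewrite E (eqP E0) eqxx.
apply/eqP => E; move/eqP: Hne; apply; apply: H2 => //.
by rewrite E (eqP E0) eqxx.
Qed.

Lemma Sset_B_g k (P : {set 'I_N * 'I_H}) : P \in Sset mo.+1 k.+1 :&: Bp -> gP P \in Sset mo k.
Proof.
rewrite inE [P \in Bp]inE => /andP [/SsetP [H1 /nonatkP H2 H3] /exists_inP [c0 Hc0 E0]].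
have -> : gP P = P :\ c0 by apply: gP_D1 => //; apply/nonatkP.
apply/SsetP; split.
- move=> c; rewrite !inE => /andP [Hne Hc].
  case/andP: (H1 c Hc) => c1 ->; rewrite andbT.
  rewrite ltnS leq_eqVlt in c1; case/orP: c1 => // c1.
  have E : c.1 = c0.1 by apply/val_inj; rewrite (eqP E0); apply/eqP.
  by rewrite (H2 c c0 Hc Hc0) ?eqxx // E eqxx in Hne.
- by apply/nonatkP => c d; rewrite !inE => /andP [_ Hc] /andP [_ Hd]; apply: H2.
- by rewrite (cardsD1 c0) Hc0 in H3; case: H3.
Qed.


Lemma notin_col k Q r : Q \in Sset mo k -> (mo, r) \notin Q.
Proof.
case/SsetP => H1 _ _; apply/negP => /H1 /andP [/= c1 _].
by rewrite ltnn in c1.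
Qed.

Lemma fiber k Q : Q \in Sset mo k ->
  [set P in Sset mo.+1 k.+1 :&: Bp | gP P == Q] = [set (mo, r) |: Q | r in RQ Q].
Proof.
move=> HQ; have := HQ; case/SsetP => HQ1 /nonatkP HQ2 HQ3.
apply/setP => P; rewrite inE; apply/andP/imsetP.
  case=> HP /eqP gPQ; move: HP; rewrite inE [P \in Bp]inE.
  case/andP => /SsetP [H1 H2 H3] /exists_inP [c0 Hc0 E0].
  have gD := gP_D1 H2 Hc0 E0.
  move/nonatkP: H2 => H2.
  exists c0.2.
    rewrite inE; case/andP: (H1 c0 Hc0) => _; rewrite (eqP E0) => -> /=.
    apply/imsetP => [[c Hc E]].
    move: Hc; rewrite -gPQ gD !inE => /andP [Hne Hc].
    by move/eqP: Hne; apply; apply: H2 => //; rewrite E eqxx orbT.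
  rewrite -gPQ gD -(eqP E0) -surjective_pairing setD1K //.
case=> r; rewrite inE => /andP [Hr Hnr] ->.
have Hn := notin_col r HQ.
split; last first.
  apply/eqP/setP => c; rewrite !inE.
  case: (eqVneq c (mo, r)) => [->|Hne] /=; first by rewrite eqxx (negbTE Hn).
  case Hc: (c \in Q); rewrite ?andbF ?andbT //.
  by apply/eqP => E; move: (HQ1 c Hc); rewrite E ltnn.
rewrite inE [_ \in Bp]inE; apply/andP; split; last first.
  by apply/exists_inP; exists (mo, r); rewrite ?setU11 ?eqxx.
apply/SsetP; split.
- move=> c; rewrite !inE => /orP [/eqP -> /=|Hc]; first by rewrite ltnS leqnn.
  by case/andP: (HQ1 c Hc) => c1 ->; rewrite andbT ltnW.
- apply/nonatkP => c d; rewrite !inE => /orP [/eqP ->|Hc] /orP [/eqP ->|Hd] //.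
  + move=> /orP [/eqP /= E|/eqP /= E]; first by move: (HQ1 d Hd); rewrite -E ltnn.
    by move: Hnr; rewrite E; case/negP; apply/imsetP; exists d.
  + move=> /orP [/eqP /= E|/eqP /= E]; first by move: (HQ1 c Hc); rewrite E ltnn.
    by move: Hnr; rewrite -E; case/negP; apply/imsetP; exists c.
  + exact: HQ2.
- by rewrite cardsU1 Hn HQ3.
Qed.

Lemma Sset_rec k : #|Sset mo.+1 k.+1| = #|Sset mo k.+1| + #|Sset mo k| * (w mo - k).
Proof.
rewrite -(cardsID Bp (Sset mo.+1 k.+1)) Sset_noB addnC; congr (_ + _).
rewrite -sum1_card (partition_big gP (mem (Sset mo k))); last first.
  by move=> P HP; apply: Sset_B_g.
rewrite -sum_nat_const; apply: eq_bigr => Q HQ.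
rewrite sum1dep_card -(card_RQ HQ).
have -> : [set x | (x \in Sset mo.+1 k.+1 :&: Bp) && (gP x == Q)] =
   [set P in Sset mo.+1 k.+1 :&: Bp | gP P == Q] by [].
rewrite fiber // card_in_imset // => r1 r2 _ _ E.
have : (mo, r1) \in (mo, r2) |: Q by rewrite -E setU11.
rewrite !inE (negbTE (notin_col _ HQ)) orbF => /eqP [].
done.
Qed.

End Rook.

Lemma Fr_cons0 c s : Fr (c :: s) 0 = Fr s 0. Proof. by []. Qed.
Lemma Fr_consS c s k : Fr (c :: s) k.+1 = (Fr s k.+1 + (Posz (size s) - c - Posz k) * Fr s k)%R.
Proof. by []. Qed.

Lemma height_ge (b : seq nat) x : x \in b -> x <= height b.
Proof.
elim: b => [//|y b IH]; rewrite inE /height /= => /orP [/eqP ->|/IH]; first exact: leq_maxl.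
by move=> h; apply: leq_trans h (leq_maxr _ _).
Qed.

Definition zr (b : seq nat) (m : nat) : seq int :=
  rev [seq (Posz i - Posz (nth 0 b i))%R | i <- iota 0 m].

Lemma zrS b m : zr b m.+1 = (Posz m - Posz (nth 0 b m))%R :: zr b m.
Proof. by rewrite /zr -addn1 iotaD map_cat rev_cat /=. Qed.

Lemma size_zr b m : size (zr b m) = m.
Proof. by rewrite size_rev size_map size_iota. Qed.

Lemma rook_Sset b k : rook_number b k = #|Sset (size b) (height b) (nth 0 b) (size b) k|.
Proof.
rewrite /rook_number /Sset; apply: eq_card => P; rewrite !inE; congr (_ && _).
by apply: eq_forallb => c; rewrite ltn_ord.
Qed.

Lemma Sset_Fr b : ferrers b -> forall m, m <= size b -> forall k,
  Posz #|Sset (size b) (height b) (nth 0 b) m k| = Fr (zr b m) k.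
Proof.
move=> fb; elim=> [|m IH] Hm k.
  case: k => [|k]; first by rewrite Sset0 cards1.
  by rewrite Sset_m0.
have mN : m < size b by [].
pose mo := Ordinal mN.
have HwH : nth 0 b mo <= height b by apply: height_ge; rewrite mem_nth.
have Hw : forall j, j < mo -> nth 0 b j <= nth 0 b mo.
  move=> j jm; apply: (sorted_leq_nth leq_trans leqnn 0 fb) => //; last exact: ltnW.
  exact: ltn_trans jm mN.
move: (IH (ltnW Hm)) => IH'.
rewrite zrS; case: k => [|k].
  by rewrite Fr_cons0 -IH' !Sset0.
rewrite Fr_consS -!IH' size_zr.
have E : #|Sset (size b) (height b) (nth 0 b) m.+1 k.+1| =
    #|Sset (size b) (height b) (nth 0 b) m k.+1| +
    #|Sset (size b) (height b) (nth 0 b) m k| * (nth 0 b m - k) := Sset_rec HwH Hw k.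
rewrite E.
case: (leqP k (nth 0 b m)) => hk.
  rewrite PoszD PoszM -subzn //; ring.
have -> : #|Sset (size b) (height b) (nth 0 b) m k| = 0.
  apply: eq_card0 => Q; apply/negbTE/negP => HQ; have := Sset_bound HwH Hw HQ; rewrite leqNgt.
  by rewrite /= hk.
by rewrite mul0n addn0 mulr0 addr0.
Qed.

Lemma rook_Fr b : ferrers b -> forall k, Posz (rook_number b k) = Fr (rev (root_vector b)) k.
Proof.
move=> fb k; rewrite rook_Sset Sset_Fr //.
Qed.

Lemma rook_equiv_perm b1 b2 : ferrers b1 -> ferrers b2 ->
  perm_eq (root_vector b1) (root_vector b2) -> rook_equiv b1 b2.
Proof.
move=> f1 f2 P k; apply/eqP; rewrite -eqz_nat; apply/eqP.
rewrite !rook_Fr //; apply: Fr_perm.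
by rewrite perm_rev perm_sym perm_rev perm_sym.
Qed.

Definition validz (z : seq nat) : Prop :=
  (forall l, l < size z -> nth 0 z l <= l) /\
  (forall l, l.+1 < size z -> nth 0 z l.+1 <= (nth 0 z l).+1).

Lemma last_pos (P : pred nat) n : (exists q, q < n /\ P q) ->
  exists j, [/\ j < n, P j & forall l, j < l -> l < n -> ~~ P l].
Proof.
elim: n => [[q []]//|n IH] [q [qn Pq]].
case Pn: (P n).
  by exists n; split => // l nl ln; exfalso; lia.
have [|j [jn Pj Hj]] := IH.
  exists q; split => //; case: (eqVneq q n) => [E|ne]; first by rewrite E Pn in Pq.
  lia.
exists j; split => //; first by lia.
move=> l jl ln; case: (eqVneq l n) => [->|ne]; first by rewrite Pn.
apply: Hj => //; lia.
Qed.

Lemma first_pos (P : pred nat) : (exists q, P q) ->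
  exists j, P j /\ forall l, l < j -> ~~ P l.
Proof.
move=> ex; case: (ex_minnP ex) => j Pj Hj; exists j; split => // l lj.
by apply/negP => /Hj; rewrite leqNgt lj.
Qed.

Lemma two_pos (s : seq nat) x : 1 < count_mem x s ->
  exists f u, [/\ f < u, u < size s, nth 0 s f = x & nth 0 s u = x].
Proof.
elim: s => [//|y s IH] /=.
case: (eqVneq y x) => [->|ne] /=.
  rewrite add1n ltnS -has_count => /(has_nthP 0) [u us Hu].
  by exists 0, u.+1; split => //; apply/eqP.
rewrite add0n => /IH [f [u [fu us Hf Hu]]].
by exists f.+1, u.+1; split.
Qed.

Lemma pos_count2 (s : seq nat) x f u : f < u -> u < size s -> nth 0 s f = x ->
  nth 0 s u = x -> 1 < count_mem x s.
Proof.
move=> fu us Hf Hu.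
have h : 0 < count_mem x (take u s).
  rewrite -has_count; apply/(has_nthP 0); exists f.
    by rewrite size_take us.
  by rewrite /= nth_take // Hf.
rewrite -(cat_take_drop u s) count_cat (drop_nth 0 us) /= Hu eqxx /=.
by rewrite addnCA add1n ltnS; apply: ltn_addr.
Qed.

Lemma exists_swap z M p : validz z ->
  (forall l, l < size z -> nth 0 z l <= M) -> M \in z ->
  (forall t, t.+1 < M -> 1 < count_mem t z -> 1 < count_mem t.+1 z) ->
  (forall l, l <= p -> nth 0 z l = l) -> p < M -> nth 0 z p.+1 != p.+1 ->
  exists i J, [/\ 0 < i, i < J, J < size z, nth 0 z i < nth 0 z J &
     nth 0 z J <= (nth 0 z i.-1).+1] /\
     (forall l, J < l -> l < size z -> nth 0 z l <= nth 0 z i).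
Proof.
move=> [V1 V2] HM Min Hc Hp pM Hne.
set n := size z.
have qn : index M z < n by rewrite index_mem.
have zq : nth 0 z (index M z) = M by rewrite nth_index.
set q := index M z in qn zq.
have Mn : M < n by have := V1 q qn; lia.
have pn : p.+1 < n by lia.
set a := nth 0 z p.+1 in Hne.
have ha : a <= p.
  have := V2 p pn; rewrite (Hp p) // -/a => h; move/eqP: Hne; lia.
have qgt : p.+1 < q.
  case: (leqP q p) => h1.
    by have := Hp q h1; rewrite zq; lia.
  case: (eqVneq q p.+1) => h2.
    by move: ha; rewrite /a -h2 zq; lia.
  lia.
have Pq : (p.+1 < q) && (a < nth 0 z q) by rewrite qgt zq /=; lia.
have [j0 [j0n /andP [pj0 aj0] Hj0]] := last_pos (P := fun l => (p.+1 < l) && (a < nth 0 z l))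
  (n := n) (ex_intro _ q (conj qn Pq)).
have Hj0' : forall l, j0 < l -> l < n -> nth 0 z l <= a.
  move=> l jl ln; have := Hj0 l jl ln; have -> : p.+1 < l by lia.
  by rewrite /= -leqNgt.
have y0M : nth 0 z j0 <= M by apply: HM.
case: (leqP (nth 0 z j0) p.+1) => hy.
  exists p.+1, j0; split => //; split => //=.
  by rewrite (Hp p).
set w0 := (nth 0 z j0).-1.
have chain : forall d, a + d < M -> 1 < count_mem (a + d) z.
  elim=> [|d IH] h.
    have ap : a < p.+1 by lia.
    by rewrite addn0; apply: (pos_count2 ap pn (Hp a ha)).
  rewrite addnS; apply: Hc; first by lia.
  by apply: IH; lia.
have cw : 1 < count_mem w0 z.
  have -> : w0 = a + (w0 - a) by rewrite /w0; lia.
  by apply: chain; rewrite /w0; lia.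
have [f [u [fu un Hf Hu]]] := two_pos cw.
have uj : u < j0.
  case: (ltngtP u j0) => // h.
    by have := Hj0' u h un; rewrite Hu /w0; lia.
  by move: Hu; rewrite h /w0; lia.
have Pu : (f < u) && (nth 0 z u <= w0) by rewrite fu Hu /=.
have [d [/andP [fd dw] Hd]] := first_pos (P := fun l => (f < l) && (nth 0 z l <= w0))
  (ex_intro _ u Pu).
have du : d <= u by case: (leqP d u) => // h; have := Hd u h; rewrite fu /= Hu leqnn.
have dpred : w0 <= nth 0 z d.-1.
  case: d fd dw Hd du => [//|d] fd dw Hd du /=.
  case: (eqVneq f d) => [<-|ne]; first by rewrite Hf.
  have fd' : f < d by lia.
  by have := Hd d (ltnSn d); rewrite fd' /= -ltnNge => /ltnW.
have Pj0 : (d < j0) && (nth 0 z d < nth 0 z j0).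
  rewrite (leq_ltn_trans du uj) /=; rewrite /w0 in dw; lia.
have [J [Jn /andP [dJ zJ] HJ]] := last_pos (P := fun l => (d < l) && (nth 0 z d < nth 0 z l))
  (n := n) (ex_intro _ j0 (conj j0n Pj0)).
have j0J : j0 <= J.
  case: (leqP j0 J) => // h; have := HJ j0 h j0n; rewrite (leq_ltn_trans du uj) /=.
  by rewrite /w0 in dw; rewrite -leqNgt; lia.
exists d, J; split; first split => //.
- by lia.
- rewrite leq_eqVlt in j0J; case/orP: j0J => [/eqP <-|h].
    by rewrite /w0 in dpred; lia.
  by have := Hj0' J h Jn; rewrite /w0 in dpred; lia.
- move=> l Jl ln; have := HJ l Jl ln; rewrite (ltn_trans dJ Jl) /=.
  by rewrite -leqNgt.
Qed.

Definition sw (i J l : nat) := if l == i then J else if l == J then i else l.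
Definition swp (z : seq nat) i J := mkseq (fun l => nth 0 z (sw i J l)) (size z).
Definition bd (z : seq nat) := mkseq (fun l => l - nth 0 z l) (size z).
Definition Psi (z : seq nat) := \sum_(l < size z) nth 0 z l * l.

Lemma size_swp z i J : size (swp z i J) = size z.
Proof. by rewrite size_mkseq. Qed.

Lemma nth_swp z i J l : l < size z -> nth 0 (swp z i J) l = nth 0 z (sw i J l).
Proof. by move=> h; rewrite nth_mkseq. Qed.

Lemma swK i J : involutive (sw i J).
Proof.
move=> l; rewrite /sw.
case: (eqVneq l i) => [->|li].
  by case: (eqVneq J i) => [->|Ji]; rewrite ?eqxx.
case: (eqVneq l J) => [->|lJ]; first by rewrite eqxx.
by rewrite (negbTE li) (negbTE lJ).
Qed.

Lemma perm_swp z i J : i < size z -> J < size z -> perm_eq (swp z i J) z.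
Proof.
move=> iz Jz.
rewrite /swp -{3}(mkseq_nth 0 z) /mkseq.
rewrite (map_comp (nth 0 z) (sw i J)); apply: perm_map.
apply: uniq_perm; first by rewrite (map_inj_uniq (can_inj (swK i J))) iota_uniq.
  exact: iota_uniq.
move=> x; rewrite -{1}(swK i J x) (mem_map (can_inj (swK i J))) !mem_iota /sw.
by case: eqVneq => [->|_]; [|case: eqVneq => [->|_]]; rewrite !add0n ?iz ?Jz.
Qed.

Lemma sw_i i J : sw i J i = J. Proof. by rewrite /sw eqxx. Qed.
Lemma sw_J i J : sw i J J = i.
Proof. by rewrite /sw; case: eqVneq => [->|]; rewrite ?eqxx. Qed.
Lemma sw_o i J l : l != i -> l != J -> sw i J l = l.
Proof. by move=> h1 h2; rewrite /sw (negbTE h1) (negbTE h2). Qed.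

Lemma valid_swp z i J : validz z -> 0 < i -> i < J -> J < size z ->
  nth 0 z i < nth 0 z J -> nth 0 z J <= (nth 0 z i.-1).+1 ->
  (J.+1 < size z -> nth 0 z J.+1 <= nth 0 z i) -> validz (swp z i J).
Proof.
case: i => [//|i] [V1 V2] _ iJ Jn zij zJ zJ1 /=.
rewrite /= in zJ.
have Vi := V1 i (ltn_trans (ltnW iJ) Jn).
have VJ := V1 J Jn.
split; rewrite size_swp => l ln.
  rewrite nth_swp //; have := V1 l ln.
  case: (eqVneq l i.+1) => [->|n1]; first by rewrite sw_i; lia.
  case: (eqVneq l J) => [->|n2]; first by rewrite sw_J; lia.
  by rewrite sw_o.
rewrite !nth_swp //; last exact: ltnW.
have Vl := V2 l ln.
case: (eqVneq l i) => [El|n1].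
  rewrite El in Vl *; rewrite sw_i (sw_o (l := i)); [lia | lia | apply/eqP; lia].
case: (eqVneq l.+1 J) => [E|n2].
  rewrite E sw_J.
  case: (eqVneq l i.+1) => [El|n3].
    rewrite El sw_i; lia.
  rewrite sw_o //; last by apply/eqP; lia.
  rewrite E in Vl; lia.
case: (eqVneq l i.+1) => [El|n3].
  rewrite El sw_i sw_o; [|apply/eqP; lia|apply/eqP; lia].
  rewrite El in Vl; lia.
case: (eqVneq l J) => [El|n4].
  rewrite El sw_J sw_o; [|apply/eqP; lia|apply/eqP; lia].
  rewrite El in ln; have := zJ1 ln; lia.
rewrite !sw_o //; apply/eqP; lia.
Qed.

Lemma sum2 (n : nat) (F : 'I_n -> nat) (a b : 'I_n) : b != a ->
  \sum_(l < n) F l = F a + F b + \sum_(l < n | (l != a) && (l != b)) F l.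
Proof.
move=> ne; rewrite (bigD1 a) //= (bigD1 b) //= addnA.
congr (_ + _); apply: eq_bigl => l; by rewrite ?andbC.
Qed.

Lemma Psi_swp z i J : i < J -> J < size z -> nth 0 z i < nth 0 z J ->
  Psi (swp z i J) < Psi z.
Proof.
move=> iJ Jn zij.
have iN : i < size z by lia.
pose i0 : 'I_(size z) := Ordinal iN.
pose J0 : 'I_(size z) := Ordinal Jn.
have ne : J0 != i0 by rewrite -val_eqE /=; apply/eqP; lia.
rewrite /Psi size_swp.
rewrite (sum2 _ ne) [X in _ < X](sum2 _ ne) /=.
rewrite !nth_swp // sw_i sw_J.
have -> : \sum_(l < size z | (l != i0) && (l != J0)) nth 0 (swp z i J) l * l =
          \sum_(l < size z | (l != i0) && (l != J0)) nth 0 z l * l.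
  apply: eq_bigr => l /andP [h1 h2].
  have h1' : val l != i by move: h1; rewrite -val_eqE.
  have h2' : val l != J by move: h2; rewrite -val_eqE.
  by rewrite nth_swp // sw_o.
rewrite ltn_add2r.
nia.
Qed.

Lemma bd_ferrers z : validz z -> ferrers (bd z).
Proof.
move=> [V1 V2]; apply/(sortedP 0) => l; rewrite size_mkseq => ln.
rewrite !nth_mkseq //; last exact: ltnW.
have := V1 l (ltnW ln); have := V2 l ln; lia.
Qed.

Lemma rv_bd z : validz z -> root_vector (bd z) = map Posz z.
Proof.
move=> [V1 _]; rewrite /root_vector size_mkseq.
rewrite -[in RHS](mkseq_nth 0 z) /mkseq -map_comp.
apply/eq_in_map => l; rewrite mem_iota add0n => /= ln.
rewrite nth_mkseq // subzn ?leq_subr // subKn //; exact: V1.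
Qed.

Lemma size_bd z : size (bd z) = size z.
Proof. by rewrite size_mkseq. Qed.

Lemma edge_swp z i J : validz z -> validz (swp z i J) -> i < J -> J < size z ->
  nth 0 z i < nth 0 z J -> rook_edge (bd z) (bd (swp z i J)).
Proof.
move=> [V1 _] [W1 _] iJ Jn zij.
have iN : i < size z by lia.
rewrite /rook_edge !size_bd size_swp maxnn /pad !size_bd size_swp subnn /=.
exists i, J, (nth 0 z J - nth 0 z i); split; first split => //.
- by apply/eqP; lia.
- by lia.
rewrite !nth_mkseq ?size_swp //.
have := W1 i; rewrite size_swp nth_swp // sw_i => /(_ iN) h1.
have := V1 J Jn => h2.
split.
- lia.
- by rewrite sw_J; lia.
move=> l ln li lJ; rewrite !nth_mkseq ?size_swp // sw_o //.
Qed.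

Lemma Posz_inj : injective Posz. Proof. by move=> x y []. Qed.

Lemma vertex_bd B zB z : ferrers B -> root_vector B = map Posz zB ->
  validz z -> perm_eq z zB -> G_vertex B (bd z).
Proof.
move=> fB rvB Vz Pz; split; first exact: bd_ferrers.
apply: rook_equiv_perm => //; first exact: bd_ferrers.
by rewrite rv_bd // rvB perm_map.
Qed.

Lemma main_ind B zB M : ferrers B -> root_vector B = map Posz zB ->
  (forall x, x \in zB -> x <= M) -> M \in zB ->
  (forall t, t.+1 < M -> 1 < count_mem t zB -> 1 < count_mem t.+1 zB) ->
  forall n z, Psi z < n -> validz z -> perm_eq z zB ->
  exists z', [/\ validz z', size z' = size z, G_connected B (bd z) (bd z') &
     forall l, l <= M -> nth 0 z' l = l].
Proof.
move=> fB rvB HM Min Hc; elim=> [//|n IH] z Pn Vz Pz.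
case: (boolP [forall l : 'I_M.+1, nth 0 z l == l]) => [/forallP Hall|Hn].
  exists z; split => //; first exact: G_refl.
  by move=> l lM; have lM1 : l < M.+1 by []; apply/eqP; exact: (Hall (Ordinal lM1)).
have [q Pq] : exists q, (q <= M) && (nth 0 z q != q).
  move: Hn; rewrite negb_forall => /existsP [l Hl]; exists l.
  by rewrite Hl andbT -ltnS ltn_ord.
have [d [/andP [dM dne] Hd]] := first_pos (P := fun l => (l <= M) && (nth 0 z l != l)) (ex_intro _ q Pq).
have szB : 0 < size z.
  by rewrite (perm_size Pz); case: (zB) Min.
have pre : forall l, l < d -> nth 0 z l = l.
  by move=> l ld; have := Hd l ld; rewrite (leq_trans (ltnW ld) dM) /= negbK => /eqP.
case: d dM dne Hd pre => [|p] dM dne Hd pre.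
  by case: Vz => V1 _; move: (V1 0 szB) dne; rewrite leqn0 => /eqP ->.
have Hz1 : forall l, l < size z -> nth 0 z l <= M.
  by move=> l ln; apply: HM; rewrite -(perm_mem Pz) mem_nth.
have Hz2 : M \in z by rewrite (perm_mem Pz).
have Hz3 : forall t, t.+1 < M -> 1 < count_mem t z -> 1 < count_mem t.+1 z.
  by move=> t tM; rewrite !(permP Pz); apply: Hc.
have Hz4 : forall l, l <= p -> nth 0 z l = l by move=> l lp; apply: pre.
have [i [J [[i0 iJ Jn zij zJ] Htail]]] := exists_swap Vz Hz1 Hz2 Hz3 Hz4 dM dne.
have V1 : validz (swp z i J).
  apply: valid_swp => // h; apply: Htail => //.
have P1 : perm_eq (swp z i J) zB by apply: perm_trans (perm_swp _ _) Pz => //; lia.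
have Ps : Psi (swp z i J) < n.
  have := Psi_swp iJ Jn zij; lia.
have [z' [Vz' sz' Gz' Hz']] := IH _ Ps V1 P1.
exists z'; split => //; first by rewrite sz' size_swp.
apply: G_step Gz'.
- exact: (vertex_bd fB rvB Vz Pz).
- exact: (vertex_bd fB rvB V1 P1).
- exact: (edge_swp Vz V1 iJ Jn zij).
Qed.

Local Open Scope ring_scope.

Theorem lemma9 (B : seq nat) (M : nat) :
  ferrers B ->
  (forall z, z \in root_vector B -> (0 <= z)%R) ->
  (M%:Z \in root_vector B) ->
  (forall z, z \in root_vector B -> (z <= M%:Z)%R) ->
  (forall i : nat, (i + 1 < M)%N ->
     (1 < vcount B i%:Z)%N -> (1 < vcount B (i.+1)%:Z)%N) ->
  exists B' : seq nat,
    [/\ size B' = size B, ferrers B', G_connected B B B' &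
        forall i : nat, (i <= M)%N -> nth 0%R (root_vector B') i = i%:Z].
Proof.
move=> fB Hnn HMin HMle Hv.
pose zB := [seq (i - nth 0%N B i)%N | i <- iota 0 (size B)].
have hb : forall l, (l < size B)%N -> (nth 0%N B l <= l)%N.
  move=> l ln.
  have : (Posz l - Posz (nth 0%N B l)) \in root_vector B.
    by apply/mapP; exists l => //; rewrite mem_iota.
  by move/Hnn; rewrite subr_ge0 lez_nat.
have szB : size zB = size B by rewrite size_map size_iota.
have nzB : forall l, (l < size B)%N -> nth 0%N zB l = (l - nth 0%N B l)%N.
  by move=> l ln; rewrite (nth_map 0%N) ?size_iota // nth_iota.
have rvB : root_vector B = map Posz zB.
  rewrite /root_vector /zB -map_comp; apply/eq_in_map => l.
  by rewrite mem_iota add0n /= => ln; rewrite subzn ?hb.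
have bdB : bd zB = B.
  apply: (@eq_from_nth _ 0%N); first by rewrite size_bd szB.
  move=> l; rewrite size_bd szB => ln.
  by rewrite nth_mkseq ?szB // nzB // subKn // hb.
have VB : validz zB.
  move/(sortedP 0%N): fB => sB.
  split; rewrite szB => l ln.
    by rewrite nzB // leq_subr.
  rewrite !nzB //; last exact: ltnW.
  have := hb l (ltnW ln); have := hb l.+1 ln; have := sB l ln; lia.
have HM' : forall x, x \in zB -> (x <= M)%N.
  move=> x xz; have := HMle (Posz x); rewrite rvB map_f // => /(_ isT).
  by rewrite lez_nat.
have Min' : M \in zB by move: HMin; rewrite rvB (mem_map Posz_inj).
have cnt : forall t, vcount B (Posz t) = count_mem t zB.
  by move=> t; rewrite /vcount rvB count_map; apply: eq_count => x.
have Hc' : forall t, (t.+1 < M)%N -> (1 < count_mem t zB)%N -> (1 < count_mem t.+1 zB)%N.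
  by move=> t tM; rewrite -!cnt; apply: Hv; rewrite addn1.
have [z' [Vz' sz' Gz' Hz']] :=
  main_ind fB rvB HM' Min' Hc' (ltnSn (Psi zB)) VB (perm_refl zB).
have Msz : (M < size zB)%N.
  case: VB => V1 _.
  have qn : (index M zB < size zB)%N by rewrite index_mem.
  have := V1 _ qn; rewrite nth_index //; lia.
exists (bd z'); split.
- by rewrite size_bd sz' szB.
- exact: bd_ferrers.
- by rewrite bdB in Gz'.
move=> i iM; rewrite rv_bd // (nth_map 0%N) ?Hz' //.
rewrite sz'; lia.
Qed.
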